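(* Let $(G,w)$ be a weighted trigraph and let $(A,B,C)$ be a cut-partition of $G$ such that $C=\{c_1,c_2\}$ is a stable set of size two of $G$. For each $X\in\{A,B\}$ let $G_X$ be the trigraph on $X\cup C$ in which $c_1c_2$ is semi-adjacent and all other adjacencies are as in $G[X\cup C]$. For every $C'\subseteq C$ set $\alpha_{A\cup C'}=\alpha(\mathrm{Red}[G_A,w;A\cup C'])+\mathrm{Ext}[G_A,w;A\cup C']$. Define $w_B:D(G_B)\to\mathbb N$ by $w_B(c_1)=\alpha_{A\cup C}-w(c_2)$, $w_B(c_2)=w(c_2)$, $w_B(c_1,c_2)=\alpha_{A\cup\{c_1\}}-\alpha_{A\cup C}+w(c_2)$, $w_B(c_2,c_1)=\alpha_{A\cup\{c_2\}}-w(c_2)$, $w_B(c_1c_2)=\alpha_A$, and $w_B(p)=w(p)$ for all $p\in D(G_B)\setminus D(G_B[C])$. Then $w_B$ is a weight function for $G_B$ (in particular all these values are non-negative), and $\alpha(G_B,w_B)=\alpha(G,w)$.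
   Context: A trigraph $G$ consists of a finite vertex set $V(G)$ and an adjacency function $\theta_G:\binom{V(G)}{2}\to\{-1,0,1\}$; for distinct $u,v$ write $uv$ for $\{u,v\}$. The pair $uv$ is strongly adjacent if $\theta_G(uv)=1$, semi-adjacent if $\theta_G(uv)=0$, strongly anti-adjacent if $\theta_G(uv)=-1$; $u,v$ are anti-adjacent if $\theta_G(uv)\le 0$. A stable set is a set of pairwise anti-adjacent vertices. For $X\subseteq V(G)$, $G[X]$ is the trigraph on $X$ with the restricted adjacency function. A cut-partition of $G$ is a partition $(A,B,C)$ of $V(G)$ with $A,B$ non-empty ($C$ possibly empty) such that every vertex of $A$ is strongly anti-adjacent to every vertex of $B$. $\mathbb N$ denotes the non-negative integers. For a trigraph $G$ let $D(G)=V(G)\cup\{(u,v):u,v\in V(G),u\neq v\}\cup\binom{V(G)}{2}$. A weight function for $G$ is a map $w:D(G)\to\mathbb N$ such that for all distinct $u,v$: if $uv$ is not semi-adjacent then $w(u,v)=w(v,u)=w(uv)=0$, and $w(u,v)\le w(uv)$. A weighted trigraph is a pair $(G,w)$ with $w$ a weight function for $G$; for an induced subtrigraph $H$, $(H,w)$ denotes $(H,w|_{D(H)})$; note $w$ restricted to $D(G_A)$ is a weight function for $G_A$. The weight of $S\subseteq V(G)$ is $\llbracket S\rrbracket_{(G,w)}=\sum_{u\in S}w(u)+\sum_{u\in S}\sum_{v\in V(G)\setminus S}w(u,v)+\sum_{uv\in\binom{V(G)\setminus S}{2}}w(uv)$, and $\alpha(G,w)=\max\{\llbracket S\rrbracket_{(G,w)}: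 S \text{ a stable set of } G\}$. For $R\subseteq V(G)$, the reduction $\mathrm{Red}[G,w;R]$ is the weighted trigraph $(G[R],w')$ where $w'(u)=\max\{w(u)-\sum_{v\in V(G)\setminus R}(w(uv)-w(u,v)),0\}$ for $u\in R$, and $w'(u,v)=w(u,v)$, $w'(uv)=w(uv)$ for distinct $u,v\in R$. The exterior weight is $\mathrm{Ext}[G,w;R]=\sum_{uv\in\binom{V(G)\setminus R}{2}}w(uv)+\sum_{u\in R}\sum_{v\in V(G)\setminus R}w(uv)$. *)

(* Defs.v *)
(* Weights are int-valued; "w : D(G) -> N" is encoded as
   int-valued maps together with non-negativity (part of is_weight). *)
From HB Require Import structures.
From mathcomp Require Import all_boot all_order all_algebra.
Set Implicit Arguments. Unset Strict Implicit. Unset Printing Implicit Defensive.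
Import Order.TTheory GRing.Theory Num.Theory.
Local Open Scope ring_scope.

(* A trigraph on a finite universe T: vertex set tV and an adjacency
   function on unordered pairs, represented as 2-element sets {u,v}. *)
Record trigraph (T : finType) := Trigraph {
  tV : {set T};
  tadj : {set T} -> int }.

Definition is_trigraph (T : finType) (G : trigraph T) : Prop :=
  forall u v, u \in tV G -> v \in tV G -> u != v ->
    -1 <= tadj G [set u; v] <= 1.

(* A weighting: w(u) for vertices, w(u,v) for ordered pairs, w(uv) for
   unordered pairs (2-element sets). *)
Record weights (T : finType) := Weights {
  wv : T -> int;
  wo : T -> T -> int;
  wu : {set T} -> int }.

Definition is_weight (T : finType) (G : trigraph T) (w : weights T) : Prop :=
  (forall u, u \in tV G -> 0 <= wv w u) /\
  (forall u v, u \in tV G -> v \in tV G -> u != v ->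
     [/\ 0 <= wo w u v, 0 <= wu w [set u; v],
         wo w u v <= wu w [set u; v] &
         (tadj G [set u; v] != 0 -> wo w u v = 0 /\ wu w [set u; v] = 0)]).

Definition stable (T : finType) (G : trigraph T) (S : {set T}) : bool :=
  (S \subset tV G) &&
  [forall u in S, forall v in S, (u != v) ==> (tadj G [set u; v] <= 0)].

Definition wset (T : finType) (G : trigraph T) (w : weights T) (S : {set T}) : int :=
  \sum_(u in S) wv w u
  + \sum_(u in S) \sum_(v in tV G :\: S) wo w u v
  + \sum_(e : {set T} | (e \subset tV G :\: S) && (#|e| == 2)%N) wu w e.

(* alpha(G,w); the default 0 is harmless since weights are non-negative
   and the empty set is stable. *)
Definition alpha (T : finType) (G : trigraph T) (w : weights T) : int :=
  \big[Num.max/0]_(S : {set T} | stable G S) wset G w S.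

Definition induced (T : finType) (G : trigraph T) (X : {set T}) : trigraph T :=
  Trigraph X (tadj G).

Definition red_w (T : finType) (G : trigraph T) (w : weights T) (R : {set T}) : weights T :=
  Weights (fun u => Num.max (wv w u - \sum_(v in tV G :\: R) (wu w [set u; v] - wo w u v)) 0)
          (wo w) (wu w).

Definition Ext (T : finType) (G : trigraph T) (w : weights T) (R : {set T}) : int :=
  \sum_(e : {set T} | (e \subset tV G :\: R) && (#|e| == 2)%N) wu w e
  + \sum_(u in R) \sum_(v in tV G :\: R) wu w [set u; v].

Definition alpha_red (T : finType) (G : trigraph T) (w : weights T) (R : {set T}) : int :=
  alpha (induced G R) (red_w G w R) + Ext G w R.

Definition cut_partition (T : finType) (G : trigraph T) (A B C : {set T}) : Prop :=
  [/\ A :|: B :|: C = tV G,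
      [&& [disjoint A & B], [disjoint A & C] & [disjoint B & C]],
      A != set0, B != set0 &
      forall a b, a \in A -> b \in B -> tadj G [set a; b] = -1].

Definition GX (T : finType) (G : trigraph T) (X : {set T}) (c1 c2 : T) : trigraph T :=
  Trigraph (X :|: [set c1; c2])
           (fun e => if e == [set c1; c2] then 0 else tadj G e).

Definition wB (T : finType) (G : trigraph T) (w : weights T) (A : {set T}) (c1 c2 : T)
  : weights T :=
  let GA := GX G A c1 c2 in
  let aAC := alpha_red GA w (A :|: [set c1; c2]) in
  let aA1 := alpha_red GA w (A :|: [set c1]) in
  let aA2 := alpha_red GA w (A :|: [set c2]) in
  let aA := alpha_red GA w A in
  Weights (fun u => if u == c1 then aAC - wv w c2
                    else if u == c2 then wv w c2 else wv w u)
          (fun u v => if (u == c1) && (v == c2) then aA1 - aAC + wv w c2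
                      else if (u == c2) && (v == c1) then aA2 - wv w c2
                      else wo w u v)
          (fun e => if e == [set c1; c2] then aA else wu w e).

(* Main.v *)
Require Import Defs.
From HB Require Import structures.
From mathcomp Require Import all_boot all_order all_algebra.
From mathcomp Require Import zify ring lra.
Import Order.TTheory GRing.Theory Num.Theory.
Local Open Scope ring_scope.
Set Implicit Arguments. Unset Strict Implicit. Unset Printing Implicit Defensive.

Lemma sumU (T : finType) (X Y : {set T}) (F : T -> int) :
  [disjoint X & Y] ->
  \sum_(i in X :|: Y) F i = \sum_(i in X) F i + \sum_(i in Y) F i.
Proof. by move=> d; rewrite -bigU //; apply: eq_bigl => i; rewrite !inE. Qed.

Definition prs (T : finType) (X : {set T}) (f : {set T} -> int) : int :=
  \sum_(e : {set T} | (e \subset X) && (#|e| == 2)%N) f e.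


Lemma prs_U (T : finType) (X Y : {set T}) (f : {set T} -> int) :
  [disjoint X & Y] ->
  prs (X :|: Y) f = prs X f + prs Y f + \sum_(x in X) \sum_(y in Y) f [set x; y].
Proof.
move=> dXY.
rewrite /prs (bigID (fun e : {set T} => e \subset X)) /=.
have -> : \sum_(i : {set T} | ((i \subset X :|: Y) && (#|i| == 2)%N) && (i \subset X)) f i
   = \sum_(e : {set T} | (e \subset X) && (#|e| == 2)%N) f e.
  apply: eq_bigl => e; case sX: (e \subset X); rewrite ?andbT ?andbF //=.
  by rewrite (subset_trans sX) // subsetUl.
rewrite [X in _ + X](bigID (fun e : {set T} => e \subset Y)) /=.
have -> : \sum_(i : {set T} | ((i \subset X :|: Y) && (#|i| == 2)%N && ~~ (i \subset X)) && (i \subset Y)) f i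
   = \sum_(e : {set T} | (e \subset Y) && (#|e| == 2)%N) f e.
  apply: eq_bigl => e; case sY: (e \subset Y); rewrite ?andbT ?andbF //=.
  rewrite (subset_trans sY) ?subsetUr //=.
  case c2: (#|e| == 2)%N => //=.
  apply/negP => sX.
  move/cards2P: c2 => [x [y [_ ->]]] in sX sY.
  have hx : x \in X by apply: (subsetP sX); rewrite !inE eqxx.
  have hy : x \in Y by apply: (subsetP sY); rewrite !inE eqxx.
  by rewrite (disjointFr dXY hx) in hy.
rewrite -addrA; congr (_ + _).
congr (_ + _).
rewrite pair_big_dep /=.
transitivity (\sum_(p in [pred p : T * T | (p.1 \in X) && (p.2 \in Y)]) f ((fun p : T * T => [set p.1; p.2]) p)).
2:{ by apply: eq_bigl => p; rewrite inE. }
rewrite -(big_imset f (h := fun p : T * T => [set p.1; p.2]) (A := [pred p : T * T | (p.1 \in X) && (p.2 \in Y)])) /=.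
  apply: eq_bigl => e; apply/idP/idP.
    move=> /andP[/andP[/andP[sXY c2] nX] nY].
    move/cards2P: c2 => [x [y [xy ee]]]; subst e.
    have hx : x \in X :|: Y by apply: (subsetP sXY); rewrite !inE eqxx.
    have hy : y \in X :|: Y by apply: (subsetP sXY); rewrite !inE eqxx orbT.
    move: hx hy; rewrite !inE => /orP[hx|hx] /orP[hy|hy].
    - by exfalso; move/negP: nX; apply; apply/subsetP => z; rewrite !inE => /orP[]/eqP->.
    - by apply/imsetP; exists (x, y); rewrite ?inE /= ?hx ?hy.
    - by apply/imsetP; exists (y, x); rewrite ?inE /= ?hx ?hy // setUC.
    - by exfalso; move/negP: nY; apply; apply/subsetP => z; rewrite !inE => /orP[]/eqP->.
  move=> /imsetP [[x y]]; rewrite inE /= => /andP[hx hy] ->.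
  have xy : x != y by apply/eqP => exy; subst; rewrite (disjointFr dXY hx) in hy.
  rewrite cards2 xy andbT; apply/andP; split; first (apply/andP; split).
  - by apply/subsetP => z; rewrite !inE => /orP[]/eqP->; rewrite ?hx ?hy ?orbT.
  - apply/negP => /subsetP /(_ y); rewrite !inE eqxx orbT => /(_ isT) hyX.
    by rewrite (disjointFr dXY hyX) in hy.
  - apply/negP => /subsetP /(_ x); rewrite !inE eqxx => /(_ isT) hxY.
    by rewrite (disjointFr dXY hx) in hxY.
move=> [x1 y1] [x2 y2]; rewrite !inE /= => /andP[hx1 hy1] /andP[hx2 hy2] E.
have: x1 \in [set x2; y2] by rewrite -E !inE eqxx.
rewrite !inE => /orP[/eqP ex|/eqP ex]; last by rewrite -ex (disjointFr dXY hx1) in hy2.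
have: y1 \in [set x2; y2] by rewrite -E !inE eqxx orbT.
rewrite !inE => /orP[/eqP ey|/eqP ey]; first by rewrite ey (disjointFr dXY hx2) in hy1.
by rewrite ex ey.
Qed.


Definition ws (T : finType) (V : {set T}) (w : weights T) (S : {set T}) : int :=
  \sum_(u in S) wv w u + \sum_(u in S) \sum_(v in V :\: S) wo w u v + prs (V :\: S) (wu w).

Lemma wsetE (T : finType) (G : trigraph T) w S : wset G w S = ws (tV G) w S.
Proof. by []. Qed.

Lemma prs_small (T : finType) (X : {set T}) f : (#|X| <= 1)%N -> prs X f = 0.
Proof.
move=> h; rewrite /prs big_pred0 // => e; apply/negP => /andP[s /eqP c].
by have := subset_leq_card s; rewrite c => /leq_trans/(_ h).
Qed.

Lemma prs0 (T : finType) f : prs (set0 : {set T}) f = 0.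
Proof. by apply: prs_small; rewrite cards0. Qed.

Lemma prs1 (T : finType) (x : T) f : prs [set x] f = 0.
Proof. by apply: prs_small; rewrite cards1. Qed.

Lemma prs_pair (T : finType) (c1 c2 : T) f : c1 != c2 -> prs [set c1; c2] f = f [set c1; c2].
Proof.
move=> d; rewrite /prs (big_pred1 [set c1; c2]) // => e /=.
apply/andP/eqP => [[s /eqP c]|->]; last by rewrite cards2 d.
by apply/eqP; rewrite eqEcard s c cards2 d.
Qed.

Definition cross (T : finType) (X Z : {set T}) (w : weights T) (S : {set T}) : int :=
  \sum_(u in S :&: X) \sum_(v in Z :\: S) wo w u v
  + \sum_(u in S :&: Z) \sum_(v in X :\: S) wo w u v
  + \sum_(x in X :\: S) \sum_(z in Z :\: S) wu w [set x; z].

Lemma ws_U (T : finType) (X Z : {set T}) (w : weights T) (S : {set T}) :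
  [disjoint X & Z] -> S \subset X :|: Z ->
  ws (X :|: Z) w S = ws X w (S :&: X) + ws Z w (S :&: Z) + cross X Z w S.
Proof.
move=> dXZ sS.
have eS : S = (S :&: X) :|: (S :&: Z) by rewrite -setIUr; apply/esym/setIidPl.
have dS : [disjoint S :&: X & S :&: Z] by apply: disjointW dXZ; apply: subsetIr.
have dD : [disjoint X :\: S & Z :\: S] by apply: disjointW dXZ; apply: subsetDl.
have eX : X :\: (S :&: X) = X :\: S.
  by apply/setP => x; rewrite !inE; case: (x \in X); rewrite ?andbT ?andbF.
have eZ : Z :\: (S :&: Z) = Z :\: S.
  by apply/setP => x; rewrite !inE; case: (x \in Z); rewrite ?andbT ?andbF.
rewrite /ws /cross eX eZ setDUl (prs_U _ dD).
rewrite {1 2}eS !sumU //.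
have h1 : forall Y : {set T}, \sum_(u in Y) \sum_(v in X :\: S :|: Z :\: S) wo w u v =
  \sum_(u in Y) \sum_(v in X :\: S) wo w u v + \sum_(u in Y) \sum_(v in Z :\: S) wo w u v.
  by move=> Y; rewrite -big_split /=; apply: eq_bigr => u _; rewrite sumU.
rewrite !h1.
ring.
Qed.


Definition vok (T : finType) (V : {set T}) (w : weights T) :=
  forall u, u \in V -> 0 <= wv w u.
Definition wok (T : finType) (V : {set T}) (w : weights T) :=
  forall u v, u \in V -> v \in V -> u != v -> 0 <= wo w u v /\ wo w u v <= wu w [set u; v].

Lemma wok_sub (T : finType) (V V' : {set T}) w : V' \subset V -> wok V w -> wok V' w.
Proof. by move=> s h u v hu hv; apply: h; apply: (subsetP s). Qed.
Lemma vok_sub (T : finType) (V V' : {set T}) w : V' \subset V -> vok V w -> vok V' w.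
Proof. by move=> s h u hu; apply: h; apply: (subsetP s). Qed.

Lemma prs_ge0 (T : finType) (V X : {set T}) w : X \subset V -> wok V w -> 0 <= prs X (wu w).
Proof.
move=> sX ok; rewrite /prs; apply: sumr_ge0 => e /andP[se /cards2P [x [y [xy ee]]]].
subst e.
have hx : x \in V by apply: (subsetP sX); apply: (subsetP se); rewrite !inE eqxx.
have hy : y \in V by apply: (subsetP sX); apply: (subsetP se); rewrite !inE eqxx orbT.
by have [h1 h2] := ok x y hx hy xy; apply: le_trans h2.
Qed.

Lemma ws_ge (T : finType) (V S : {set T}) w : S \subset V -> wok V w ->
  \sum_(u in S) wv w u <= ws V w S.
Proof.
move=> sS ok; rewrite /ws -addrA lerDl; apply: addr_ge0.
  apply: sumr_ge0 => u uS; apply: sumr_ge0 => v; rewrite !inE => /andP[vS vV].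
  have uv : u != v by apply/eqP => e; subst; rewrite uS in vS.
  by have [] := ok u v (subsetP sS u uS) vV uv.
by apply: (prs_ge0 (V := V)) => //; apply: subsetDl.
Qed.

Lemma ws_ge0 (T : finType) (V S : {set T}) w : S \subset V -> vok V w -> wok V w ->
  0 <= ws V w S.
Proof.
move=> sS vk ok; apply: le_trans (ws_ge sS ok); apply: sumr_ge0 => u uS.
by apply: vk; apply: (subsetP sS).
Qed.

Lemma ws_remove (T : finType) (V S : {set T}) w u : S \subset V -> wok V w -> u \in S ->
  ws V w S - wv w u + \sum_(v in V :\: S) (wu w [set u; v] - wo w u v) <= ws V w (S :\ u).
Proof.
move=> sS ok uS.
have uV : u \in V by apply: (subsetP sS).
have eD : V :\: (S :\ u) = (V :\: S) :|: [set u].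
  apply/setP => x; rewrite !inE; case: eqP => [->|_]; rewrite ?uV ?uS //=.
  by rewrite orbF.
have dD : [disjoint V :\: S & [set u]].
  by rewrite disjoint_sym disjoints1 !inE uS.
rewrite /ws eD (prs_U _ dD) prs1 (big_setD1 _ uS) (big_setD1 u uS) /=.
have h1 : \sum_(i in S :\ u) \sum_(v in V :\: S) wo w i v <=
          \sum_(u0 in S :\ u) \sum_(v in V :\: S :|: [set u]) wo w u0 v.
  apply: ler_sum => x; rewrite !inE => /andP[xu xS]; rewrite sumU // big_set1 lerDl.
  by have [] := ok x u (subsetP sS x xS) uV xu.
have h2 : \sum_(x in V :\: S) \sum_(y in [set u]) wu w [set x; y] =
          \sum_(v in V :\: S) wu w [set u; v].
  by apply: eq_bigr => x _; rewrite big_set1 setUC.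
rewrite h2 sumrB; lra.
Qed.


Definition dR (T : finType) (G : trigraph T) (w : weights T) (R : {set T}) (u : T) : int :=
  \sum_(v in tV G :\: R) (wu w [set u; v] - wo w u v).

Lemma sum_aux (T : finType) (S V : {set T}) (m a : T -> int) (b c : T -> T -> int) :
  \sum_(u in S) (m u - (a u - \sum_(v in V) (b u v - c u v))) =
  \sum_(u in S) m u - \sum_(u in S) a u + \sum_(u in S) \sum_(v in V) b u v
  - \sum_(u in S) \sum_(v in V) c u v.
Proof.
rewrite (eq_bigr (fun u => (m u - a u + \sum_(v in V) b u v) - \sum_(v in V) c u v)); last first.
  by move=> u _; rewrite sumrB; ring.
rewrite (sumrB _ _ (fun i => m i - a i + \sum_(v in V) b i v)). by rewrite big_split /= (sumrB _ _ m).
Qed.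

Lemma red_id (T : finType) (G : trigraph T) (w : weights T) (R S : {set T}) :
  R \subset tV G -> S \subset R ->
  ws R (red_w G w R) S + Ext G w R =
  ws (tV G) w S + \sum_(u in S) (wv (red_w G w R) u - (wv w u - dR G w R u)).
Proof.
move=> sR sS.
have eV : tV G = R :|: (tV G :\: R).
  apply/setP=> x; rewrite !inE; case xR: (x \in R) => //=.
  by rewrite (subsetP sR x xR).
have dRV : [disjoint R & tV G :\: R].
  by rewrite -setI_eq0; apply/eqP/setP => x; rewrite !inE; case: (x \in R); rewrite ?andbF.
have sS' : S \subset R :|: (tV G :\: R) by apply: (subset_trans sS); apply: subsetUl.
have e1 := ws_U w dRV sS'.
rewrite -eV in e1; rewrite e1.
have eSR : S :&: R = S by apply/setIidPl.
have eS0 : S :&: (tV G :\: R) = set0.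
  apply/setP => x; rewrite !inE; case xS: (x \in S) => //=.
  by rewrite (subsetP sS x xS).
have eVS : (tV G :\: R) :\: S = tV G :\: R.
  apply/setP => x; rewrite !inE; case xR: (x \in R); rewrite ?andbF //=.
  by case xS: (x \in S) => //; rewrite (subsetP sS x xS) in xR.
have eE : Ext G w R = prs (tV G :\: R) (wu w) + \sum_(u in R) \sum_(v in tV G :\: R) wu w [set u; v] by [].
have eR : R = S :|: (R :\: S).
  apply/setP=> x; rewrite !inE; case xS: (x \in S) => //=.
  by rewrite (subsetP sS x xS).
have dSR : [disjoint S & R :\: S].
  by rewrite -setI_eq0; apply/eqP/setP => x; rewrite !inE; case: (x \in S); rewrite ?andbF.
have hR : \sum_(u in R) \sum_(v in tV G :\: R) wu w [set u; v] =
  \sum_(u in S) \sum_(v in tV G :\: R) wu w [set u; v] + \sum_(u in R :\: S) \sum_(v in tV G :\: R) wu w [set u; v].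
  by rewrite {1}eR sumU.
rewrite eE hR /cross eSR eS0 eVS /ws /= !big_set0 setD0.
rewrite /dR sum_aux /=; ring.
Qed.


Lemma alpha_ge (T : finType) (G : trigraph T) w S : stable G S -> wset G w S <= alpha G w.
Proof. by move=> st; rewrite /alpha (bigD1 S) //= le_max lexx. Qed.

Lemma stable0 (T : finType) (G : trigraph T) : stable G set0.
Proof. by rewrite /stable sub0set; apply/forallP => u; rewrite inE. Qed.

Lemma alpha_att (T : finType) (G : trigraph T) w : 0 <= wset G w set0 ->
  exists S, stable G S /\ alpha G w <= wset G w S.
Proof.
move=> h; rewrite /alpha.
apply: (big_ind (fun x => exists S, stable G S /\ x <= wset G w S)).
- by exists set0; split => //; apply: stable0.
- move=> x y [S1 [s1 h1]] [S2 [s2 h2]].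
  case: (leP x y) => _; [by exists S2|by exists S1].
- by move=> S st; exists S.
Qed.

Lemma stable_sub (T : finType) (G : trigraph T) (S S' : {set T}) :
  S' \subset S -> stable G S -> stable G S'.
Proof.
move=> s /andP[sV /forallP h]; apply/andP; split; first exact: subset_trans sV.
apply/forallP => u; apply/implyP => uS; apply/forallP => v; apply/implyP => vS.
by have /implyP/(_ (subsetP s u uS))/forallP/(_ v)/implyP/(_ (subsetP s v vS)) := h u.
Qed.

Lemma stable_ind (T : finType) (G : trigraph T) (R S : {set T}) :
  R \subset tV G -> stable (induced G R) S = (S \subset R) && stable G S.
Proof.
move=> sR; rewrite /stable /=.
case sS: (S \subset R) => //=.
by rewrite (subset_trans sS sR).
Qed.

Lemma sum_sub_le (T : finType) (A B : {set T}) (g : T -> int) :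
  A \subset B -> (forall x, x \in B -> 0 <= g x) -> \sum_(x in A) g x <= \sum_(x in B) g x.
Proof.
move=> s h; rewrite [X in _ <= X](big_setID A) /=.
have -> : B :&: A = A by apply/setIidPr.
rewrite lerDl; apply: sumr_ge0 => x; rewrite inE => /andP[_]; exact: h.
Qed.

Lemma AR1 (T : finType) (G : trigraph T) (w : weights T) (R X : {set T}) :
  R \subset tV G -> X \subset R -> stable G X ->
  wset G w X <= alpha_red G w R.
Proof.
move=> sR sX st; rewrite /alpha_red.
have h : stable (induced G R) X by rewrite stable_ind // sX.
apply: le_trans (lerD (alpha_ge (red_w G w R) h) (lexx (Ext G w R))).
rewrite wsetE /= red_id // -wsetE lerDl; apply: sumr_ge0 => u _ /=.
by rewrite /dR subr_ge0 le_max lexx.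
Qed.

Lemma AR2 (T : finType) (G : trigraph T) (w : weights T) (R : {set T}) (M : int) :
  R \subset tV G -> vok (tV G) w -> wok (tV G) w ->
  (forall X : {set T}, X \subset R -> stable G X -> wset G w X <= M) ->
  alpha_red G w R <= M.
Proof.
move=> sR vk ok hM; rewrite /alpha_red.
have okR : wok R (red_w G w R) by apply: (wok_sub sR).
have [S [st hS]] : exists S, stable (induced G R) S /\
    alpha (induced G R) (red_w G w R) <= wset (induced G R) (red_w G w R) S.
  apply: alpha_att; rewrite wsetE /=; apply: ws_ge0 => //; first exact: sub0set.
  by move=> u _ /=; rewrite le_max lexx orbT.
apply: le_trans (lerD hS (lexx _)) _; clear hS.
move: st; rewrite stable_ind // => /andP[sS st].
rewrite wsetE /=.
move: {2}#|S| (leqnn #|S|) => n; elim: n S sS st => [|n IH] S sS st hn.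
  have -> : S = set0 by apply/eqP; rewrite -cards_eq0; move: hn; case: #|S|.
  rewrite red_id ?sub0set // big_set0 addr0; apply: hM; [exact: sub0set|exact: stable0].
case: (boolP [exists u in S, wv w u - dR G w R u < 0]).
  case/exists_inP => u uS xu.
  have sS' : S :\ u \subset R by apply: subset_trans sS; apply: subsetDl.
  have st' : stable G (S :\ u) by apply: stable_sub st; apply: subsetDl.
  have hn' : (#|S :\ u| <= n)%N by move: hn; rewrite (cardsD1 u S) uS.
  apply: le_trans (IH _ sS' st' hn').
  rewrite !red_id //.
  rewrite (big_setD1 u uS) /=.
  have sSV : S \subset tV G by apply: subset_trans sR.
  have hrem := ws_remove sSV ok uS.
  have hd : dR G w R u <= \sum_(v in tV G :\: S) (wu w [set u; v] - wo w u v).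
    apply: sum_sub_le.
      apply/subsetP => x; rewrite !inE => /andP[xR ->]; rewrite andbT.
      by apply/negP => xS; rewrite (subsetP sS x xS) in xR.
    move=> x; rewrite !inE => /andP[xS xV]; rewrite subr_ge0.
    have ux : u != x by apply/eqP => e; subst; rewrite uS in xS.
    by have [] := ok u x (subsetP sSV u uS) xV ux.
  have hm : Num.max (wv w u - dR G w R u) 0 = 0 by apply/max_idPr; apply: ltW.
  rewrite /= -/(dR G w R u) hm.
  lra.
rewrite negb_exists_in => /forall_inP h.
rewrite red_id // big1 ?addr0; first by apply: hM.
move=> u uS /=; rewrite -/(dR G w R u).
have := h u uS; rewrite -leNgt => hx.
by rewrite (max_idPl hx) subrr.
Qed.


Lemma cross_U (T : finType) (X Y Z : {set T}) (w : weights T) (S : {set T}) :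
  [disjoint Y & Z] -> cross X (Y :|: Z) w S = cross X Y w S + cross X Z w S.
Proof.
move=> dYZ.
have d1 : [disjoint Y :\: S & Z :\: S] by apply: disjointW dYZ; apply: subsetDl.
have d2 : [disjoint S :&: Y & S :&: Z] by apply: disjointW dYZ; apply: subsetIr.
rewrite /cross setDUl setIUr sumU //.
have h1 : forall (Q : {set T}) (F : T -> T -> int),
  \sum_(u in Q) \sum_(v in Y :\: S :|: Z :\: S) F u v =
  \sum_(u in Q) \sum_(v in Y :\: S) F u v + \sum_(u in Q) \sum_(v in Z :\: S) F u v.
  by move=> Q F; rewrite -big_split /=; apply: eq_bigr => u _; rewrite sumU.
rewrite (h1 _ (wo w)) (h1 _ (fun x z => wu w [set x; z])) /=.
ring.
Qed.

Lemma cross_zero (T : finType) (X Z : {set T}) (w : weights T) (S : {set T}) :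
  (forall x z, x \in X -> z \in Z -> [/\ wo w x z = 0, wo w z x = 0 & wu w [set x; z] = 0]) ->
  cross X Z w S = 0.
Proof.
move=> h; rewrite /cross.
rewrite big1; last first.
  move=> x; rewrite inE => /andP[_ hx]; apply: big1 => z; rewrite inE => /andP[_ hz].
  by have [] := h x z hx hz.
rewrite add0r big1; last first.
  move=> z; rewrite inE => /andP[_ hz]; apply: big1 => x; rewrite inE => /andP[_ hx].
  by have [] := h x z hx hz.
rewrite add0r big1 // => x; rewrite inE => /andP[_ hx]; apply: big1 => z; rewrite inE => /andP[_ hz].
by have [] := h x z hx hz.
Qed.

Lemma cross_restr (T : finType) (X Z : {set T}) (w : weights T) (S : {set T}) :
  cross X Z w (S :&: (X :|: Z)) = cross X Z w S.
Proof.
have e1 : forall Q : {set T}, (S :&: (X :|: Z)) :&: Q = S :&: Q -> True by [].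
have eX : (S :&: (X :|: Z)) :&: X = S :&: X.
  by apply/setP => x; rewrite !inE; case: (x \in S); case: (x \in X); rewrite ?andbF.
have eZ : (S :&: (X :|: Z)) :&: Z = S :&: Z.
  by apply/setP => x; rewrite !inE; case: (x \in S); case: (x \in Z); rewrite ?orbT ?andbF.
have dX : X :\: (S :&: (X :|: Z)) = X :\: S.
  by apply/setP => x; rewrite !inE; case: (x \in S); case: (x \in X); rewrite ?andbF.
have dZ : Z :\: (S :&: (X :|: Z)) = Z :\: S.
  by apply/setP => x; rewrite !inE; case: (x \in S); case: (x \in Z); rewrite ?orbT ?andbF.
by rewrite /cross eX eZ dX dZ.
Qed.

Lemma ws_agree (T : finType) (B C : {set T}) (w1 w2 : weights T) (Y : {set T}) :
  [disjoint B & C] -> Y \subset B :|: C ->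
  (forall u, u \notin C -> wv w1 u = wv w2 u) ->
  (forall u v, ~~ ((u \in C) && (v \in C)) -> wo w1 u v = wo w2 u v) ->
  (forall e : {set T}, ~~ (e \subset C) -> wu w1 e = wu w2 e) ->
  ws (B :|: C) w1 Y - ws C w1 (Y :&: C) = ws (B :|: C) w2 Y - ws C w2 (Y :&: C).
Proof.
move=> dBC sY hv ho hu.
rewrite !ws_U //.
have nC : forall x, x \in B -> x \notin C by move=> x xB; rewrite (disjointFr dBC xB).
have eB : ws B w1 (Y :&: B) = ws B w2 (Y :&: B).
  rewrite /ws; congr (_ + _ + _).
  - by apply: eq_bigr => u; rewrite inE => /andP[_ uB]; apply: hv; apply: nC.
  - apply: eq_bigr => u; rewrite inE => /andP[_ uB]; apply: eq_bigr => v _.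
    by apply: ho; rewrite (negbTE (nC u uB)).
  - rewrite /prs; apply: eq_bigr => e /andP[se /cards2P [x [y [_ ee]]]]; apply: hu.
    subst e; apply/negP => /subsetP /(_ x); rewrite !inE eqxx /= => /(_ isT) xC.
    have : x \in B by move: (subsetP se x); rewrite !inE eqxx => /(_ isT) /andP[].
    by move=> /nC; rewrite xC.
have eX : cross B C w1 Y = cross B C w2 Y.
  rewrite /cross; congr (_ + _ + _).
  - apply: eq_bigr => u; rewrite inE => /andP[_ uB]; apply: eq_bigr => v _.
    by apply: ho; rewrite (negbTE (nC u uB)).
  - apply: eq_bigr => u _; apply: eq_bigr => v; rewrite inE => /andP[_ vB].
    by apply: ho; rewrite (negbTE (nC v vB)) andbF.
  - apply: eq_bigr => x; rewrite inE => /andP[_ xB]; apply: eq_bigr => z _.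
    apply: hu; apply/negP => /subsetP /(_ x); rewrite !inE eqxx /= => /(_ isT) xC.
    by move: (nC x xB); rewrite xC.
rewrite eB eX; ring.
Qed.

Lemma ws_mono (T : finType) (V C : {set T}) (w : weights T) :
  wok V w -> (forall u, u \in C -> wv w u = 0) ->
  forall Y Z : {set T}, Z \subset Y -> Y \subset V -> Y :\: Z \subset C ->
  ws V w Y <= ws V w Z.
Proof.
move=> ok h0 Y Z.
move: {2}#|Y| (leqnn #|Y|) => n; elim: n Y => [|n IH] Y hn sZ sY sC.
  have eY : Y = set0 by apply/eqP; rewrite -cards_eq0; move: hn; case: #|Y|.
  have eZ : Z = set0 by apply/eqP; rewrite -subset0 -eY.
  by rewrite eY eZ.
case: (eqVneq Y Z) => [-> //|nYZ].
have [u uYZ] : exists u, u \in Y :\: Z.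
  apply/set0Pn; apply/negP => /eqP e; apply/negP: nYZ; rewrite negbK eqEsubset sZ andbT.
  by rewrite -setD_eq0 e.
move: (uYZ); rewrite inE => /andP[uZ uY].
have hr := ws_remove sY ok uY.
rewrite h0 ?(subsetP sC) // subr0 in hr.
have hs : 0 <= \sum_(v in V :\: Y) (wu w [set u; v] - wo w u v).
  apply: sumr_ge0 => v; rewrite inE => /andP[vY vV]; rewrite subr_ge0.
  have uv : u != v by apply/eqP => e; subst; rewrite uY in vY.
  by have [] := ok u v (subsetP sY u uY) vV uv.
apply: le_trans (IH (Y :\ u) _ _ _ _).
- lra.
- by move: hn; rewrite (cardsD1 u Y) uY.
- apply/subsetP => x xZ; rewrite !inE (subsetP sZ x xZ) andbT.
  by apply/eqP => e; subst; rewrite xZ in uZ.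
- by apply: subset_trans sY; apply: subsetDl.
- apply: subset_trans sC; apply/subsetP => x; rewrite !inE.
  by case/and3P => -> _ ->.
Qed.


Lemma stable_intro (T : finType) (G : trigraph T) (S : {set T}) :
  S \subset tV G -> (forall u v, u \in S -> v \in S -> u != v -> tadj G [set u; v] <= 0) ->
  stable G S.
Proof.
move=> sS h; rewrite /stable sS /=; apply/forallP => u; apply/implyP => uS.
apply/forallP => v; apply/implyP => vS; apply/implyP => uv; exact: h.
Qed.

Lemma stable_elim (T : finType) (G : trigraph T) (S : {set T}) u v :
  stable G S -> u \in S -> v \in S -> u != v -> tadj G [set u; v] <= 0.
Proof.
move=> /andP[_ /forallP h] uS vS uv.
by have /implyP/(_ uS)/forallP/(_ v)/implyP/(_ vS)/implyP/(_ uv) := h u.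
Qed.

Lemma stable_sub0 (T : finType) (G : trigraph T) (S : {set T}) :
  stable G S -> S \subset tV G.
Proof. by case/andP. Qed.

Lemma GX_le (T : finType) (G : trigraph T) (X : {set T}) c1 c2 u v :
  tadj G [set c1; c2] <= 0 -> tadj (GX G X c1 c2) [set u; v] <= 0 -> tadj G [set u; v] <= 0.
Proof. by rewrite /GX /=; case: eqP => [->|]. Qed.

Lemma GX_ge (T : finType) (G : trigraph T) (X : {set T}) c1 c2 u v :
  tadj G [set u; v] <= 0 -> tadj (GX G X c1 c2) [set u; v] <= 0.
Proof. by rewrite /GX /=; case: eqP. Qed.

Lemma stable_GX (T : finType) (G : trigraph T) (X : {set T}) c1 c2 (S : {set T}) :
  stable G S -> S \subset tV (GX G X c1 c2) -> stable (GX G X c1 c2) S.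
Proof.
move=> st sS; apply: stable_intro => // u v uS vS uv.
by apply: GX_ge; apply: (stable_elim st).
Qed.

Lemma set2_eq (T : finType) (c1 c2 u v : T) : u != v ->
  [set u; v] = [set c1; c2] -> ((u == c1) && (v == c2)) || ((u == c2) && (v == c1)).
Proof.
move=> uv E.
have : u \in [set c1; c2] by rewrite -E !inE eqxx.
have : v \in [set c1; c2] by rewrite -E !inE eqxx orbT.
rewrite !inE => /orP[] /eqP ev /orP[] /eqP eu; subst; rewrite ?eqxx ?orbT //=.
- by rewrite eqxx in uv.
- by rewrite eqxx in uv.
Qed.


Lemma sub_rm (T : finType) (X R : {set T}) c : X \subset R :|: [set c] -> X :\ c \subset R.
Proof.
move=> s; apply/subsetP => x; rewrite !inE => /andP[xc xX].
by have := subsetP s x xX; rewrite !inE (negbTE xc) orbF.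
Qed.

Lemma sub_nin (T : finType) (X R : {set T}) c : X \subset R :|: [set c] -> c \notin X -> X \subset R.
Proof.
move=> s cX; apply/subsetP => x xX.
have := subsetP s x xX; rewrite !inE => /orP[//|/eqP e].
by rewrite -e xX in cX.
Qed.

Unset Implicit Arguments.
Theorem lemma3p11 (T : finType) (G : trigraph T) (w : weights T)
  (A B : {set T}) (c1 c2 : T) :
  is_trigraph G -> is_weight G w ->
  c1 != c2 ->
  cut_partition G A B [set c1; c2] ->
  stable G [set c1; c2] ->
  is_weight (GX G B c1 c2) (wB G w A c1 c2) /\
  alpha (GX G B c1 c2) (wB G w A c1 c2) = alpha G w.
Proof.
move=> _ iw c12 [eV dj _ _ cut] stC.
case/and3P: dj => dAB dAC dBC.
have [vkp okp] := iw.
have vk : vok (tV G) w by [].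
have ok : wok (tV G) w.
  by move=> u v hu hv uv; have [h1 _ h3 _] := okp u v hu hv uv.
have sAV : A \subset tV G by rewrite -eV -setUA subsetUl.
have sBV : B \subset tV G by rewrite -eV -setUA setUA setUAC subsetUr.
have sCV : [set c1; c2] \subset tV G by rewrite -eV subsetUr.
have sAC : A :|: [set c1; c2] \subset tV G by rewrite subUset sAV sCV.
have sBC : B :|: [set c1; c2] \subset tV G by rewrite subUset sBV sCV.
have vkA := vok_sub sAC vk.
have okA := wok_sub sAC ok.
have okB := wok_sub sBC ok.
have c1C : c1 \in [set c1; c2] by rewrite !inE eqxx.
have c2C : c2 \in [set c1; c2] by rewrite !inE eqxx orbT.
have stCC : tadj G [set c1; c2] <= 0 by apply: (stable_elim stC).
have czero : forall a b, a \in A -> b \in B ->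
    [/\ wo w a b = 0, wo w b a = 0 & wu w [set a; b] = 0].
  move=> a b aA bB.
  have ab : a != b by apply/eqP => e; move: bB; rewrite -e (disjointFr dAB aA).
  have aV := subsetP sAV a aA; have bV := subsetP sBV b bB.
  have t1 : tadj G [set a; b] != 0 by rewrite cut.
  have t2 : tadj G [set b; a] != 0 by rewrite setUC cut.
  have [_ _ _ /(_ t1) [h1 h2]] := okp a b aV bV ab.
  have [_ _ _ /(_ t2) [h3 _]] := okp b a bV aV (ltac:(by rewrite eq_sym)).
  by split.
have dA : [disjoint A & B :|: [set c1; c2]].
  rewrite -setI_eq0; apply/eqP/setP => x; rewrite !inE.
  case xA: (x \in A) => //=.
  by move: (disjointFr dAB xA) (disjointFr dAC xA); rewrite !inE => -> ->.
have K2 : forall S : {set T}, S \subset tV G ->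
    ws (tV G) w S = ws (A :|: [set c1; c2]) w (S :&: (A :|: [set c1; c2]))
      + ws (B :|: [set c1; c2]) w (S :&: (B :|: [set c1; c2]))
      - ws [set c1; c2] w (S :&: [set c1; c2]).
  move=> S sS.
  have eV' : tV G = A :|: (B :|: [set c1; c2]) by rewrite -eV -setUA.
  move: sS; rewrite eV' => sS.
  rewrite (ws_U w dA sS) (cross_U _ _ _ dBC) (cross_zero S czero) add0r.
  rewrite (ws_U w dAC (subsetIr S _)) cross_restr.
  have e1 : S :&: (A :|: [set c1; c2]) :&: A = S :&: A.
    by apply/setP => x; rewrite !inE; case: (x \in A); rewrite ?andbT ?andbF.
  have e2 : S :&: (A :|: [set c1; c2]) :&: [set c1; c2] = S :&: [set c1; c2].
    by apply/setP => x; rewrite !inE; case: (x == c1); case: (x == c2); rewrite ?orbT ?andbT ?andbF.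
  rewrite e1 e2; ring.
pose w0 := Weights (fun u => if u \in [set c1; c2] then 0 else wv w u)
  (fun u v => if (u \in [set c1; c2]) && (v \in [set c1; c2]) then 0 else wo w u v)
  (fun e => if e \subset [set c1; c2] then 0 else wu w e).
have ok0 : wok (B :|: [set c1; c2]) w0.
  move=> u v hu hv uv; rewrite /w0 /=.
  case: ifP => [/andP[uC vC]|nC].
    by rewrite ifT // subUset !sub1set uC vC.
  rewrite ifF; first exact: okB.
  apply/negP; rewrite subUset !sub1set => /andP[uC vC].
  by rewrite uC vC in nC.
have h00 : forall u, u \in [set c1; c2] -> wv w0 u = 0 by move=> u uC; rewrite /w0 /= uC.
have c0 : forall Z : {set T}, Z \subset [set c1; c2] -> ws [set c1; c2] w0 Z = 0.
  move=> Z sZ; rewrite /ws big1; last by move=> u uZ; rewrite /= (subsetP sZ u uZ).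
  rewrite add0r big1; last first.
    move=> u uZ; apply: big1 => v; rewrite inE => /andP[_ vC].
    by rewrite /= (subsetP sZ u uZ) vC.
  rewrite add0r /prs big1 // => e /andP[se _] /=.
  by rewrite (subset_trans se) // subsetDl.
have D2w : forall Y : {set T}, Y \subset B :|: [set c1; c2] ->
    ws (B :|: [set c1; c2]) w Y - ws [set c1; c2] w (Y :&: [set c1; c2]) =
    ws (B :|: [set c1; c2]) w0 Y.
  move=> Y sY; rewrite (ws_agree (w2 := w0) dBC sY).
  - by rewrite c0 ?subsetIr // subr0.
  - by move=> u /negbTE uC; rewrite /w0 /= uC.
  - by move=> u v /negbTE h; rewrite /w0 /= h.
  - by move=> e /negbTE h; rewrite /w0 /= h.
have D2B : forall Y : {set T}, Y \subset B :|: [set c1; c2] ->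
    ws (B :|: [set c1; c2]) (wB G w A c1 c2) Y
    - ws [set c1; c2] (wB G w A c1 c2) (Y :&: [set c1; c2]) =
    ws (B :|: [set c1; c2]) w0 Y.
  move=> Y sY; rewrite (ws_agree (w2 := w0) dBC sY).
  - by rewrite c0 ?subsetIr // subr0.
  - move=> u uC; rewrite /w0 /wB /= (negbTE uC).
    have h1 : (u == c1) = false by apply/negP => /eqP e; rewrite e c1C in uC.
    have h2 : (u == c2) = false by apply/negP => /eqP e; rewrite e c2C in uC.
    by rewrite h1 h2.
  - move=> u v h; rewrite /w0 /wB /= (negbTE h).
    case: (boolP ((u == c1) && (v == c2))) => [/andP[/eqP e1 /eqP e2]|_].
      by rewrite e1 e2 c1C c2C in h.
    case: (boolP ((u == c2) && (v == c1))) => [/andP[/eqP e1 /eqP e2]|_] //.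
    by rewrite e1 e2 c1C c2C in h.
  - move=> e h; rewrite /w0 /wB /= (negbTE h).
    case: eqP => // ee; by rewrite ee subxx in h.
have c21 : (c2 == c1) = false by rewrite eq_sym (negbTE c12).
have subC : forall Z : {set T}, Z \subset [set c1; c2] ->
    [\/ Z = set0, Z = [set c1], Z = [set c2] | Z = [set c1; c2]].
  move=> Z sZ.
  have hZ : forall x, x \in Z -> (x == c1) || (x == c2).
    by move=> x xZ; have := subsetP sZ x xZ; rewrite !inE.
  case h1: (c1 \in Z); case h2: (c2 \in Z).
  - apply: Or44; apply/setP => x; rewrite !inE; apply/idP/idP => [/hZ //|].
    by case/orP => /eqP ->.
  - apply: Or42; apply/setP => x; rewrite !inE; apply/idP/idP => [xZ|/eqP -> //].
    by case/orP: (hZ x xZ) => /eqP e //; rewrite e h2 in xZ.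
  - apply: Or43; apply/setP => x; rewrite !inE; apply/idP/idP => [xZ|/eqP -> //].
    by case/orP: (hZ x xZ) => /eqP e //; rewrite e h1 in xZ.
  - apply: Or41; apply/setP => x; rewrite !inE; apply/negbTE/negP => xZ.
    by case/orP: (hZ x xZ) => /eqP e; [rewrite e h1 in xZ|rewrite e h2 in xZ].
have eC1 : [set c1; c2] :\: [set c1] = [set c2].
  apply/setP => x; rewrite !inE; case: (eqVneq x c1) => [->|] //=.
  by rewrite (negbTE c12).
have eC2 : [set c1; c2] :\: [set c2] = [set c1].
  apply/setP => x; rewrite !inE; case: (eqVneq x c2) => [->|] //=; rewrite ?c21 ?orbF //.
have cZ : forall Z : {set T}, Z \subset [set c1; c2] ->
    ws [set c1; c2] (wB G w A c1 c2) Z = alpha_red (GX G A c1 c2) w (A :|: Z).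
  move=> Z /subC [] ->.
  - by rewrite /ws !big_set0 setD0 prs_pair // /wB /= eqxx add0r setU0.
  - rewrite /ws !big_set1 eC1 big_set1 prs1 /wB /= !eqxx /=; ring.
  - rewrite /ws !big_set1 eC2 big_set1 prs1 /wB /= !eqxx c21 /=; ring.
  - rewrite /ws setDv big_setU1 /=; last by rewrite !inE eq_sym c21.
    rewrite big_set1 big1 ?prs0; last by move=> u _; rewrite big_set0.
    by rewrite /wB /= !eqxx c21 /=; ring.
have eAC : A :|: [set c1; c2] = (A :|: [set c1]) :|: [set c2].
  by apply/setP => x; rewrite !inE orbA.
have sRA : forall Z : {set T}, Z \subset [set c1; c2] -> A :|: Z \subset tV (GX G A c1 c2).
  by move=> Z sZ; rewrite /= setUS.
have AR1' : forall R X : {set T}, R \subset A :|: [set c1; c2] -> X \subset R ->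
    stable (GX G A c1 c2) X -> ws (A :|: [set c1; c2]) w X <= alpha_red (GX G A c1 c2) w R.
  by move=> R X sR sX st; rewrite -[ws _ w X]/(wset (GX G A c1 c2) w X); apply: AR1.
have AR2' : forall (R : {set T}) (M : int), R \subset A :|: [set c1; c2] ->
    (forall X : {set T}, X \subset R -> stable (GX G A c1 c2) X -> ws (A :|: [set c1; c2]) w X <= M) ->
    alpha_red (GX G A c1 c2) w R <= M.
  by move=> R M sR h; apply: AR2.
have rem : forall (X : {set T}) u, X \subset A :|: [set c1; c2] -> u \in X ->
    ws (A :|: [set c1; c2]) w X <= ws (A :|: [set c1; c2]) w (X :\ u) + wv w u.
  move=> X u sX uX; have h := ws_remove sX okA uX.
  have : 0 <= \sum_(v in (A :|: [set c1; c2]) :\: X) (wu w [set u; v] - wo w u v).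
    apply: sumr_ge0 => v; rewrite inE => /andP[vX vV]; rewrite subr_ge0.
    have uv : u != v by apply/eqP => e; move: vX; rewrite -e uX.
    by have [] := okA u v (subsetP sX u uX) vV uv.
  lra.
have stGA : forall X : {set T}, X \subset A :|: [set c1; c2] -> stable (GX G A c1 c2) X ->
    forall u, stable (GX G A c1 c2) (X :\ u).
  by move=> X _ st u; apply: stable_sub st; apply: subsetDl.
have w1p : 0 <= wv w c1 by apply: vk; apply: (subsetP sCV).
have w2p : 0 <= wv w c2 by apply: vk; apply: (subsetP sCV).
have st2 : stable (GX G A c1 c2) [set c2].
  apply: stable_GX; last by rewrite /= sub1set !inE eqxx !orbT.
  by apply: stable_sub stC; rewrite sub1set.
have st12 : stable (GX G A c1 c2) [set c1; c2] by apply: stable_GX; rewrite //= subsetUr.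
have ws2 : wv w c2 <= ws (A :|: [set c1; c2]) w [set c2].
  apply: le_trans (ws_ge _ okA); first by rewrite big_set1.
  by rewrite sub1set !inE eqxx !orbT.
have b_i : wv w c2 <= alpha_red (GX G A c1 c2) w (A :|: [set c1; c2]).
  by apply: le_trans ws2 _; apply: AR1' => //; rewrite sub1set !inE eqxx !orbT.
have b_iv : wv w c2 <= alpha_red (GX G A c1 c2) w (A :|: [set c2]).
  apply: le_trans ws2 _; apply: AR1' => //; last by rewrite sub1set !inE eqxx !orbT.
  by apply: setUS; rewrite sub1set !inE eqxx orbT.
have b_vi : 0 <= alpha_red (GX G A c1 c2) w A.
  apply: le_trans (AR1' _ _ _ (sub0set _) (stable0 _)); first by apply: ws_ge0; rewrite ?sub0set.
  exact: subsetUl.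
have b_ii : alpha_red (GX G A c1 c2) w (A :|: [set c1; c2]) <=
            alpha_red (GX G A c1 c2) w (A :|: [set c1]) + wv w c2.
  apply: AR2' => // X sX st.
  case: (boolP (c2 \in X)) => c2X.
    apply: le_trans (rem _ _ sX c2X) _; rewrite lerD2r; apply: AR1' (stGA _ sX st _).
      by apply: setUS; rewrite sub1set !inE eqxx.
    by apply: sub_rm; rewrite -eAC.
  rewrite -[X in X <= _]addr0; apply: (lerD _ w2p); apply: AR1' => //.
    by apply: setUS; rewrite sub1set !inE eqxx.
  by apply: sub_nin c2X; rewrite -eAC.
have sA1 : A :|: [set c1] \subset A :|: [set c1; c2] by apply: setUS; rewrite sub1set !inE eqxx.
have sA2 : A :|: [set c2] \subset A :|: [set c1; c2] by apply: setUS; rewrite sub1set !inE eqxx orbT.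
have sA0 : A \subset A :|: [set c1; c2] by apply: subsetUl.
have w12 : wv w c1 + wv w c2 <= alpha_red (GX G A c1 c2) w (A :|: [set c1; c2]).
  apply: le_trans (AR1' _ _ (subxx _) _ st12); first last.
    exact: subsetUr.
  apply: le_trans (ws_ge _ okA); last exact: subsetUr.
  by rewrite big_setU1 ?big_set1 // !inE eq_sym c21.
have b_iii : alpha_red (GX G A c1 c2) w (A :|: [set c1]) <=
    alpha_red (GX G A c1 c2) w A + alpha_red (GX G A c1 c2) w (A :|: [set c1; c2]) - wv w c2.
  apply: AR2' => // X sX st.
  have sX' : X \subset A :|: [set c1; c2] by apply: subset_trans sA1.
  case: (boolP (c1 \in X)) => c1X.
    have h1 := rem _ _ sX' c1X.
    have h2 : ws (A :|: [set c1; c2]) w (X :\ c1) <= alpha_red (GX G A c1 c2) w A.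
      by apply: AR1' (stGA _ sX' st _) => //; apply: sub_rm.
    lra.
  have h2 : ws (A :|: [set c1; c2]) w X <= alpha_red (GX G A c1 c2) w A.
    by apply: AR1' st => //; apply: sub_nin c1X.
  lra.
have b_v : alpha_red (GX G A c1 c2) w (A :|: [set c2]) <=
    alpha_red (GX G A c1 c2) w A + wv w c2.
  apply: AR2' => // X sX st.
  have sX' : X \subset A :|: [set c1; c2] by apply: subset_trans sA2.
  case: (boolP (c2 \in X)) => c2X.
    have h1 := rem _ _ sX' c2X.
    have h2 : ws (A :|: [set c1; c2]) w (X :\ c2) <= alpha_red (GX G A c1 c2) w A.
      by apply: AR1' (stGA _ sX' st _) => //; apply: sub_rm.
    lra.
  have h2 : ws (A :|: [set c1; c2]) w X <= alpha_red (GX G A c1 c2) w A.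
    by apply: AR1' st => //; apply: sub_nin c2X.
  lra.
have e21 : [set c2; c1] = [set c1; c2] by rewrite setUC.
have iwB : is_weight (GX G B c1 c2) (wB G w A c1 c2).
  split.
    move=> u hu; rewrite /wB /=; case: ifP => _; first lra.
    case: ifP => _ //; apply: vk; exact: (subsetP sBC).
  move=> u v hu hv uv; rewrite /wB /GX /=.
  case: (boolP ((u == c1) && (v == c2))) => [/andP[/eqP e1 /eqP e2]|n1].
    subst; rewrite !eqxx /=; split => //; lra.
  case: (boolP ((u == c2) && (v == c1))) => [/andP[/eqP e1 /eqP e2]|n2].
    subst; rewrite e21 !eqxx /=; split => //; lra.
  have ne : ([set u; v] == [set c1; c2]) = false.
    apply/negbTE/negP => /eqP E; have := set2_eq uv E.
    by rewrite (negbTE n1) (negbTE n2).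
  rewrite ne.
  by apply: okp => //; apply: (subsetP sBC).
split => //.
have nBA : forall x, x \in B -> (x \in A) = false by move=> x xB; apply: (disjointFl dAB xB).
have nBC : forall x, x \in B -> (x \in [set c1; c2]) = false by move=> x xB; apply: (disjointFr dBC xB).
have nAC : forall x, x \in A -> (x \in [set c1; c2]) = false by move=> x xA; apply: (disjointFr dAC xA).
apply/eqP; rewrite eq_le; apply/andP; split; last first.
  have [S [stS hS]] : exists S, stable G S /\ alpha G w <= wset G w S.
    by apply: alpha_att; apply: ws_ge0 => //; apply: sub0set.
  apply: le_trans hS _.
  have sS := stable_sub0 stS.
  rewrite wsetE K2 //.
  have sY : S :&: (B :|: [set c1; c2]) \subset B :|: [set c1; c2] by apply: subsetIr.
  have h1 := D2w _ sY; rewrite -(D2B _ sY) in h1.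
  have eYC : S :&: (B :|: [set c1; c2]) :&: [set c1; c2] = S :&: [set c1; c2].
    by apply/setP => x; rewrite !inE; case: (x \in S); case: (x == c1); case: (x == c2); rewrite ?orbT ?andbF.
  rewrite eYC in h1.
  have h2 : ws (A :|: [set c1; c2]) w (S :&: (A :|: [set c1; c2])) <=
            ws [set c1; c2] (wB G w A c1 c2) (S :&: [set c1; c2]).
    rewrite cZ ?subsetIr //; apply: AR1'.
    - by apply: setUS; apply: subsetIr.
    - apply/subsetP => x; rewrite !inE => /andP[xS /orP[->//|xC]].
      by rewrite xS xC orbT.
    - by apply: stable_GX; [apply: stable_sub stS; apply: subsetIl|apply: subsetIr].
  have h3 : ws (B :|: [set c1; c2]) (wB G w A c1 c2) (S :&: (B :|: [set c1; c2])) <=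
            alpha (GX G B c1 c2) (wB G w A c1 c2).
    apply: (alpha_ge (G := GX G B c1 c2)).
    by apply: stable_GX; [apply: stable_sub stS; apply: subsetIl|apply: subsetIr].
  lra.
have [vkB okBp] := iwB.
have [Y [stY hY]] : exists Y, stable (GX G B c1 c2) Y /\
    alpha (GX G B c1 c2) (wB G w A c1 c2) <= wset (GX G B c1 c2) (wB G w A c1 c2) Y.
  apply: alpha_att; apply: ws_ge0; first exact: sub0set.
    by move=> u hu; apply: vkB.
  by move=> u v hu hv uv; have [] := okBp u v hu hv uv.
apply: le_trans hY _.
have sY : Y \subset B :|: [set c1; c2] := stable_sub0 stY.
rewrite wsetE /=.
have e1 := D2B _ sY.
rewrite cZ ?subsetIr // in e1.
have -> : ws (B :|: [set c1; c2]) (wB G w A c1 c2) Y =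
   ws (B :|: [set c1; c2]) w0 Y + alpha_red (GX G A c1 c2) w (A :|: (Y :&: [set c1; c2])) by lra.
rewrite -lerBrDl.
apply: AR2'; first by apply: setUS; apply: subsetIr.
move=> X sX stX.
have sXA : X \subset A :|: [set c1; c2].
  by apply: subset_trans sX _; apply: setUS; apply: subsetIr.
pose S := X :|: (Y :&: B).
have sSV : S \subset tV G.
  rewrite subUset (subset_trans sXA sAC) /=.
  by apply: subset_trans sBV; apply: subsetIr.
have XB : forall x, x \in X -> x \in B -> x \in Y.
  move=> x xX xB; have := subsetP sX x xX; rewrite !inE (nBA _ xB) /=.
  by case/andP.
have XA : forall x, x \in X -> x \notin A -> x \in Y.
  move=> x xX xA; have := subsetP sX x xX; rewrite inE (negbTE xA) /= inE.
  by case/andP.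
have stS : stable G S.
  apply: stable_intro => //.
  have mix : forall u v, u \in X -> v \in Y :&: B -> u != v -> tadj G [set u; v] <= 0.
    move=> u v uX; rewrite inE => /andP[vY vB] uv.
    case: (boolP (u \in A)) => uA; first by rewrite cut.
    apply: (GX_le (X := B) stCC); apply: (stable_elim stY) => //.
    exact: XA.
  move=> u v; rewrite !inE => /orP[uX|/andP[uY uB]] /orP[vX|/andP[vY vB]] uv.
  - by apply: (GX_le (X := A) stCC); apply: (stable_elim stX).
  - by apply: mix => //; rewrite inE vY vB.
  - by rewrite setUC; apply: mix => //; [rewrite inE uY uB|rewrite eq_sym].
  - by apply: (GX_le (X := B) stCC); apply: (stable_elim stY).
have hK := K2 S sSV.
have eSA : S :&: (A :|: [set c1; c2]) = X.
  apply/setP => x; rewrite !inE.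
  case xX: (x \in X) => /=; first by have := subsetP sXA x xX; rewrite !inE.
  case xB: (x \in B); rewrite ?andbF //= (nBA _ xB) /=.
  by have := nBC _ xB; rewrite !inE => ->; rewrite andbF.
have sSB : S :&: (B :|: [set c1; c2]) \subset B :|: [set c1; c2] by apply: subsetIr.
have h2 := D2w _ sSB.
have eSC : S :&: (B :|: [set c1; c2]) :&: [set c1; c2] = S :&: [set c1; c2].
  by rewrite -setIA; congr (_ :&: _); apply/setIidPr; apply: subsetUr.
rewrite eSC in h2.
have hm : ws (B :|: [set c1; c2]) w0 Y <= ws (B :|: [set c1; c2]) w0 (S :&: (B :|: [set c1; c2])).
  apply: (ws_mono ok0 h00) => //.
  - apply/subsetP => x; rewrite !inE => /andP[/orP[xX|/andP[xY xB]] xV] //.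
    case xB: (x \in B); first exact: XB.
    apply: XA => //; apply/negP => xA.
    by have := nAC _ xA; rewrite !inE => h; move: xV; rewrite xB h.
  - apply/subsetP => x; rewrite !inE => /andP[nS xY].
    case xB: (x \in B).
      by move: nS; rewrite xY xB /= orbT.
    by have := subsetP sY x xY; rewrite !inE xB.
have hS := alpha_ge w stS.
rewrite wsetE hK eSA in hS.
lra.
Qed.
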